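(* For every integer $n\ge0$, $B_{3,1}(n)=T(n)$. Here $B_{3,1}(n)$ is the number of partitions $\pi=(\pi_1\ge\pi_2\ge\dots\ge\pi_\ell)$ of $n$ such that $m_1(\pi)=0$, $m_j(\pi)+m_{j+1}(\pi)\le 2$ for all $j\ge1$, and for every $1\le j<\ell$, if $\pi_j-\pi_{j+1}\le1$ then $\pi_j+\pi_{j+1}\equiv 0\pmod 2$. And $T(n)$ is the number of partitions $\lambda$ of $n$ such that: $m_j(\lambda)\le 1$ for odd $j$; $m_j(\lambda)=0$ for odd $j<R_1(\lambda)+2$; $m_j(\lambda)\ge2$ for even $j$ with $0<j<R_1(\lambda)$; and no two consecutive integers both appear as parts of $\lambda$.
   Context: $m_j(\pi)$ is the multiplicity of $j$ as a part of $\pi$. $R_1(\lambda)$ is the largest part of $\lambda$ with multiplicity at least $2$, or $0$ if there is none. *)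

(* Defs.v *)
From mathcomp Require Import all_boot.
Set Implicit Arguments. Unset Strict Implicit. Unset Printing Implicit Defensive.

Definition is_partition (n : nat) (s : seq nat) : bool :=
  [&& sorted geq s, all (fun x => 0 < x) s & sumn s == n].

Fixpoint seqs_len (k m : nat) : seq (seq nat) :=
  if k is k'.+1 then [seq x :: t | x <- iota 0 m, t <- seqs_len k' m] else [:: [::]].

(* a finite list containing every partition of n (each at most once) *)
Definition cand (n : nat) : seq (seq nat) :=
  flatten [seq seqs_len k n.+1 | k <- iota 0 n.+1].

Definition count_partitions (P : seq nat -> bool) (n : nat) : nat :=
  count (fun s => is_partition n s && P s) (cand n).

Definition mult (s : seq nat) (j : nat) : nat := count_mem j s.

(* R_1: largest part with multiplicity >= 2, or 0 *)
Definition R1 (s : seq nat) : nat :=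
  \max_(j <- s | 2 <= mult s j) j.

Definition B31_cond (s : seq nat) : bool :=
  [&& mult s 1 == 0,
      all (fun j => mult s j + mult s j.+1 <= 2) (iota 1 (sumn s).+1) &
      all (fun i => (nth 0 s i - nth 0 s i.+1 <= 1) ==>
                    ~~ odd (nth 0 s i + nth 0 s i.+1))
          (iota 0 (size s).-1)].

Definition T_cond (s : seq nat) : bool :=
  [&& all (fun j => odd j ==> (mult s j <= 1)) s,
      all (fun j => (odd j && (j < R1 s + 2)) ==> (mult s j == 0)) (iota 0 (R1 s + 2)),
      all (fun j => (~~ odd j && (0 < j) && (j < R1 s)) ==> (2 <= mult s j)) (iota 0 (R1 s)) &
      all (fun j => mult s j.+1 == 0) s].

Definition B31 (n : nat) : nat := count_partitions B31_cond n.
Definition T (n : nat) : nat := count_partitions T_cond n.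

(* Main.v *)
Require Import Defs.
From mathcomp Require Import all_boot zify.
Set Implicit Arguments. Unset Strict Implicit. Unset Printing Implicit Defensive.


Lemma seqs_len_size k m s : s \in seqs_len k m -> size s = k.
Proof.
elim: k s => [|k IH] s /=; first by rewrite inE => /eqP ->.
by case/allpairsPdep => x [t [_ Ht ->]] /=; rewrite (IH _ Ht).
Qed.

Lemma seqs_len_uniq k m : uniq (seqs_len k m).
Proof.
elim: k => [|k IH] //=.
apply: allpairs_uniq => //; first exact: iota_uniq.
by move=> [x1 t1] [x2 t2] _ _ /= [-> ->].
Qed.

Lemma seqs_len_mem s m : all (fun x => x < m) s -> s \in seqs_len (size s) m.
Proof.
elim: s => [|x s IH] //= /andP [Hx Hs].
apply/allpairsPdep; exists x, s; split => //.
  by rewrite mem_iota.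
exact: IH.
Qed.

Lemma uniq_flat ks m : uniq ks -> uniq (flatten [seq seqs_len k m | k <- ks]).
Proof.
elim: ks => [|k ks IH] //= /andP [Hk Hks].
rewrite cat_uniq seqs_len_uniq IH // andbT /=.
apply/hasPn => s /flattenP [l /mapP [k' Hk' ->]] Hs.
apply/negP => Hs2.
move: (seqs_len_size Hs) (seqs_len_size Hs2) => E1 E2.
have Ek : k' = k by rewrite -E1 -E2.
by move: Hk; rewrite -Ek Hk'.
Qed.

Lemma cand_uniq n : uniq (cand n).
Proof. exact/uniq_flat/iota_uniq. Qed.

Lemma part_le n s : all (fun x => 0 < x) s -> sumn s = n -> all (fun x => x < n.+1) s /\ size s <= n.
Proof.
elim: s n => [|x s IH] n //= /andP [Hx Hs] E.
have [H1 H2] := IH _ Hs erefl.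
split; last by lia.
apply/andP; split; first by lia.
apply/allP => y Hy; move/allP: H1 => /(_ y Hy); lia.
Qed.

Lemma cand_mem n s : is_partition n s -> s \in cand n.
Proof.
case/and3P => _ Hpos /eqP E.
have [H1 H2] := part_le Hpos E.
apply/flattenP; exists (seqs_len (size s) n.+1); last exact: seqs_len_mem.
apply/mapP; exists (size s) => //; rewrite mem_iota; lia.
Qed.

Lemma count_bij (P Q : seq nat -> bool) (f : seq nat -> seq nat) n :
  (forall s, is_partition n s -> P s -> is_partition n (f s) && Q (f s)) ->
  (forall s1 s2, is_partition n s1 -> P s1 -> is_partition n s2 -> P s2 -> f s1 = f s2 -> s1 = s2) ->
  (forall t, is_partition n t -> Q t -> exists2 s, is_partition n s && P s & f s = t) ->
  count_partitions P n = count_partitions Q n.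
Proof.
move=> Hf Hinj Hsur; rewrite /count_partitions -!size_filter.
set L := cand n.
rewrite -(size_map f); apply: perm_size; apply: uniq_perm.
- rewrite map_inj_in_uniq; first by apply: filter_uniq; exact: cand_uniq.
  move=> s1 s2; rewrite !mem_filter => /andP [/andP [H1 H2] _] /andP [/andP [H3 H4] _].
  exact: Hinj.
- by apply: filter_uniq; exact: cand_uniq.
- move=> t; apply/idP/idP.
  + case/mapP => s; rewrite mem_filter => /andP [/andP [H1 H2] _] ->.
    rewrite mem_filter Hf //; exact: cand_mem (proj1 (andP (Hf _ H1 H2))).
  + rewrite mem_filter => /andP [/andP [H1 H2] _].
    have [s /andP [Hs1 Hs2] <-] := Hsur _ H1 H2.
    apply: map_f; rewrite mem_filter Hs1 Hs2; exact: cand_mem.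
Qed.


Inductive Bi : seq nat -> Prop :=
| Bnil : Bi [::]
| Bone j s : 2 <= j -> all (fun x => x + 2 <= j) s -> Bi s -> Bi (j :: s)
| Btwo j s : 2 <= j -> all (fun x => x + 2 <= j) s -> Bi s -> Bi (j :: j :: s).

Fixpoint f (s : seq nat) : seq nat :=
  match s with
  | [::] => [::]
  | j :: s' =>
    match s' with
    | [::] => [:: j]
    | k :: s'' => if k == j then map (addn 2) (f s'') ++ nseq (j - size (f s'')) 2
                  else j :: f s'
    end
  end.

Lemma f_one j s : all (fun x => x + 2 <= j) s -> f (j :: s) = j :: f s.
Proof.
case: s => [|k s] //= /andP [Hk _].
have -> : (k == j) = false by apply/negbTE; apply/eqP; lia.
by [].
Qed.

Lemma f_two j s : f (j :: j :: s) = map (addn 2) (f s) ++ nseq (j - size (f s)) 2.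
Proof. by rewrite /= eqxx. Qed.

Lemma Bi_head s : Bi s -> all (fun x => x <= head 0 s) s.
Proof.
case => [|j s' Hj Ha _|j s' Hj Ha _] //=; rewrite ?leqnn /=.
  apply/allP => x /(allP Ha); lia.
apply/allP => x /(allP Ha); lia.
Qed.

Lemma Bi_ge2 s : Bi s -> all (fun x => 2 <= x) s.
Proof. by elim => //= j s' Hj _ _ ->; rewrite Hj. Qed.

Lemma sumn_map2 t : sumn (map (addn 2) t) = sumn t + 2 * size t.
Proof. elim: t => //= x t ->; lia. Qed.

Lemma geq_trans : transitive geq.
Proof. move=> x y z /= H1 H2; lia. Qed.

Lemma sorted_geq_cat a b : sorted geq a -> sorted geq b ->
  (forall x y, x \in a -> y \in b -> y <= x) -> sorted geq (a ++ b).
Proof.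
elim: a => [|x a IH] //= Ha Hb H.
move: Ha; rewrite /= !(path_sortedE geq_trans) => /andP [Ha1 Ha2].
apply/andP; split.
  rewrite all_cat Ha1 /=; apply/allP => y Hy; apply: H => //; by rewrite inE eqxx.
apply: IH => // u v Hu Hv; apply: H => //; by rewrite inE Hu orbT.
Qed.

Lemma sorted_nseq (c x : nat) : sorted geq (nseq c x).
Proof. by elim: c => [|c IH] //=; case: c IH => //= c ->; rewrite leqnn. Qed.

Lemma f_props s : Bi s ->
  [/\ all (fun x => 2 <= x) (f s), all (fun x => x <= head 0 s) (f s),
      size (f s) <= head 0 s, sumn (f s) = sumn s & sorted geq (f s)].
Proof.
elim => [|j s' Hj Ha Hs [H1 H2 H3 H4 H5]|j s' Hj Ha Hs [H1 H2 H3 H4 H5]] //.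
- rewrite f_one //=.
  have hs : head 0 s' + 2 <= j \/ s' = [::].
    by move: Ha; case: (s') => [|y s''] /=; [right | move/andP=> [? _]; left].
  split.
  + by rewrite Hj H1.
  + rewrite /= leqnn /=; apply/allP => x /(allP H2).
    case: hs => [|E2]; first lia.
    by rewrite E2 /=; lia.
  + case: hs H3 => [|E2]; first lia.
    by rewrite E2 /=; lia.
  + by rewrite H4.
  + rewrite /=; case E: (f s') H5 => [|y t] //= ->; rewrite andbT.
    have : y \in f s' by rewrite E inE eqxx.
    move/(allP H2); case: hs => [|E2]; first lia.
    by move: E; rewrite E2.
- have hs : head 0 s' + 2 <= j.
    move: Ha; case: (s') => [|y s''] /=; [lia | move/andP=> [? _]; lia].
  rewrite f_two; split.
  + rewrite all_cat; apply/andP; split.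
      by rewrite all_map; apply/allP => x _ /=; lia.
    by apply/allP => x /nseqP [->].
  + rewrite all_cat; apply/andP; split.
      rewrite all_map; apply/allP => x /(allP H2) /=; lia.
    by apply/allP => x /nseqP [-> _]; rewrite /=.
  + rewrite size_cat size_map size_nseq /=; lia.
  + rewrite sumn_cat sumn_map2 sumn_nseq /=; lia.
  + apply: sorted_geq_cat.
    * by apply: (homo_sorted (e:=geq)) => //= x y; lia.
    * exact: sorted_nseq.
    * move=> x y /mapP [z _ ->] /nseqP [-> _]; lia.
Qed.

Lemma f_head s : Bi s -> head 0 s <= maxn (size (f s)) (head 0 (f s)).
Proof.
case => [|j s' Hj Ha Hs|j s' Hj Ha Hs] //.
- rewrite f_one //=; lia.
- have [_ _ H3 _ _] := f_props Hs.
  have hs : head 0 s' + 2 <= j.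
    move: Ha; case: (s') => [|y s''] /=; [lia | move/andP=> [? _]; lia].
  rewrite f_two size_cat size_map size_nseq /=; lia.
Qed.

Lemma f_nil s : Bi s -> f s = [::] -> s = [::].
Proof.
case => [|j s' Hj Ha Hs|j s' Hj Ha Hs] //; first by rewrite f_one.
rewrite f_two => E; have := congr1 size E; rewrite size_cat size_map size_nseq /=.
have [_ _ H3 _ _] := f_props Hs.
have hs : head 0 s' + 2 <= j.
  move: Ha; case: (s') => [|y s''] /=; [lia | move/andP=> [? _]; lia].
lia.
Qed.

Lemma crit1 j s : 2 <= j -> all (fun x => x + 2 <= j) s -> Bi s ->
  size (f (j :: s)) < head 0 (f (j :: s)).
Proof.
move=> Hj Ha Hs; rewrite f_one //=.
have [_ _ H3 _ _] := f_props Hs.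
have : head 0 s + 2 <= j \/ s = [::].
  by move: Ha; case: (s) => [|y s''] /=; [right | move/andP=> [? _]; left].
case=> [|->] /=; lia.
Qed.

Lemma crit2 j s : 2 <= j -> all (fun x => x + 2 <= j) s -> Bi s ->
  head 0 (f (j :: j :: s)) <= size (f (j :: j :: s)).
Proof.
move=> Hj Ha Hs; have [H1 H2 H3 _ _] := f_props Hs.
have hs : head 0 s + 2 <= j.
  move: Ha; case: (s) => [|y s''] /=; [lia | move/andP=> [? _]; lia].
rewrite f_two size_cat size_map size_nseq.
case E: (f s) => [|y t] /=.
  have -> : j - 0 = (j - 2).+2 by lia. by rewrite /=; lia.
have : y \in f s by rewrite E inE eqxx.
move/(allP H2); rewrite E /= in H3; lia.
Qed.

Lemma filter_f2 t c : all (fun x => 2 <= x) t ->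
  filter (fun x => 2 < x) (map (addn 2) t ++ nseq c 2) = map (addn 2) t.
Proof.
move=> Ht; rewrite filter_cat.
have -> : filter (fun x => 2 < x) (nseq c 2) = [::] by elim: c.
rewrite cats0; apply/all_filterP; rewrite all_map; apply/allP => x /(allP Ht) /=; lia.
Qed.

Lemma f_inj s1 s2 : Bi s1 -> Bi s2 -> f s1 = f s2 -> s1 = s2.
Proof.
move=> H1; elim: H1 s2 => [|j s Hj Ha Hs IH|j s Hj Ha Hs IH] s2 H2.
- by move=> E; rewrite (f_nil H2 (esym E)).
- case: H2 => [|k s' Hk Ha' Hs'|k s' Hk Ha' Hs'].
  + by rewrite f_one.
  + by rewrite !f_one // => -[-> E]; rewrite (IH _ Hs' E).
  + move=> E; have := crit1 Hj Ha Hs; have := crit2 Hk Ha' Hs'; rewrite E; lia.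
- case: H2 => [|k s' Hk Ha' Hs'|k s' Hk Ha' Hs'].
  + by move=> E; have := f_nil (Btwo Hj Ha Hs) E.
  + move=> E; have := crit1 Hk Ha' Hs'; have := crit2 Hj Ha Hs; rewrite E; lia.
  + move=> E.
    have [G1 _ G3 _ _] := f_props Hs; have [G1' _ G3' _ _] := f_props Hs'.
    have hs : head 0 s + 2 <= j.
      move: Ha; case: (s) => [|y s''] /=; [lia | move/andP=> [? _]; lia].
    have hs' : head 0 s' + 2 <= k.
      move: Ha'; case: (s') => [|y s''] /=; [lia | move/andP=> [? _]; lia].
    have Ejk : j = k.
      have := congr1 size E; rewrite !f_two !size_cat !size_map !size_nseq; lia.
    have := congr1 (filter (fun x => 2 < x)) E; rewrite !f_two !filter_f2 //.
    move/(inj_map (@addnI 2)) => E2.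
    by rewrite Ejk (IH _ Hs' E2).
Qed.

Fixpoint adj (s : seq nat) : bool :=
  match s with
  | a :: ((b :: _) as s') => ((a - b <= 1) ==> ~~ odd (a + b)) && adj s'
  | _ => true
  end.

Lemma adj_eq s : all (fun i => (nth 0 s i - nth 0 s i.+1 <= 1) ==> ~~ odd (nth 0 s i + nth 0 s i.+1))
                     (iota 0 (size s).-1) = adj s.
Proof.
elim: s => [|a s IH]; first by [].
case: s IH => [|b s] IH; first by [].
have -> : adj [:: a, b & s] = ((a - b <= 1) ==> ~~ odd (a + b)) && adj (b :: s) by [].
rewrite -IH.
have E1 : iota 0 (size [:: a, b & s]).-1 = [:: 0] ++ map (addn 1) (iota 0 (size s)) by rewrite -iotaDl.
have E2 : iota 0 (size (b :: s)).-1 = iota 0 (size s) by [].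
rewrite E1 E2 all_cat all_map; congr andb.
all: try by rewrite /= andbT.
all: by apply: eq_all => i /=; rewrite add1n.
Qed.

Lemma cnt_cons (x j : nat) s : count_mem j (x :: s) = (x == j) + count_mem j s.
Proof. by []. Qed.

Lemma F1 n : (n == n.+1) = false.
Proof. by apply/negbTE/eqP; lia. Qed.
Lemma F2 n : (n.+1 == n) = false.
Proof. by apply/negbTE/eqP; lia. Qed.

Lemma Bi_mult s : Bi s -> forall j, count_mem j s + count_mem j.+1 s <= 2.
Proof.
elim => [|j s1 Hj Ha Hs IH|j s1 Hj Ha Hs IH] x //.
- have Z : forall y, j <= y.+1 -> count_mem y s1 = 0.
    by move=> y Hy; apply/count_memPn/negP => /(allP Ha); lia.
  rewrite !cnt_cons.
  have [E|nx] := eqVneq j x.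
    subst x; rewrite (Z j) ?(Z j.+1) ?eqxx ?F1 ?F2 /=; lia.
  have [E|nx2] := eqVneq j x.+1.
    subst j; rewrite (Z x) ?(Z x.+1) ?eqxx ?F1 ?F2 /=; lia.
  have := IH x; lia.
- have Z : forall y, j <= y.+1 -> count_mem y s1 = 0.
    by move=> y Hy; apply/count_memPn/negP => /(allP Ha); lia.
  rewrite !cnt_cons.
  have [E|nx] := eqVneq j x.
    subst x; rewrite (Z j) ?(Z j.+1) ?eqxx ?F1 ?F2 /=; lia.
  have [E|nx2] := eqVneq j x.+1.
    subst j; rewrite (Z x) ?(Z x.+1) ?eqxx ?F1 ?F2 /=; lia.
  have := IH x; lia.
Qed.

Lemma Bi_adj s : Bi s -> adj s.
Proof.
elim => [|j s1 Hj Ha Hs IH|j s1 Hj Ha Hs IH] //.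
- case: s1 Ha Hs IH => [|y s2] //= /andP [Hy _] _ ->; rewrite andbT.
  apply/implyP; lia.
- case: s1 Ha Hs IH => [|y s2] /=.
    by rewrite subnn /= addnn odd_double.
  move=> /andP [Hy _] _ ->; rewrite subnn /= addnn odd_double /= andbT.
  apply/implyP; lia.
Qed.

Lemma Bi_B31 s : Bi s -> B31_cond s.
Proof.
move=> H; rewrite /B31_cond /mult; apply/and3P; split.
- apply/eqP/count_memPn/negP => /(allP (Bi_ge2 H)); lia.
- apply/allP => j _; exact: Bi_mult.
- by rewrite adj_eq; exact: Bi_adj.
Qed.

Lemma B_Bi_aux n s : size s <= n -> sorted geq s -> all (fun x => 2 <= x) s ->
  (forall j, count_mem j s + count_mem j.+1 s <= 2) -> adj s -> Bi s.
Proof.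
elim: n s => [|n IH] s Hn Hsort Hall Hm Hadj.
  have -> : s = [::] by case: s Hn {Hsort Hall Hm Hadj}.
  exact: Bnil.
case: s Hn Hsort Hall Hm Hadj => [|j s] Hn Hsort Hall Hm Hadj; first exact: Bnil.
move: Hall => /= /andP [Hj Hall]; move: Hn => /= Hn.
move: Hsort; rewrite /= (path_sortedE geq_trans) => /andP [Hle Hsort].
case: s Hn Hle Hsort Hall Hm Hadj => [|k s] Hn Hle Hsort Hall Hm Hadj.
  by apply: Bone => //; exact: Bnil.
move: Hle => /= /andP [Hkj Hle].
move: Hsort; rewrite /= (path_sortedE geq_trans) => /andP [Hle2 Hsort2].
move: Hall => /= /andP [Hk Hall].
move: Hadj => /= /andP [Hadj1 Hadj].
have Hm' : forall x, count_mem x (k :: s) + count_mem x.+1 (k :: s) <= 2.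
  move=> x; have := Hm x; rewrite !cnt_cons; lia.
have [Ekj|nkj] := eqVneq k j.
- subst k.
  case: s Hn Hle Hsort2 Hall Hm Hm' Hadj Hle2 => [|l s] Hn Hle Hsort2 Hall Hm Hm' Hadj Hle2.
    by apply: Btwo => //; exact: Bnil.
  move: Hle2 => /= /andP [Hlj Hle2].
  move: Hadj => /= /andP [Hadj2 Hadj].
  have Hlj2 : l + 2 <= j.
    have Hl : l != j.
      apply/eqP => E; have := Hm j; rewrite !cnt_cons E eqxx; lia.
    have Hl1 : l.+1 != j.
      apply/eqP => E; move: Hadj2; rewrite -E.
      have -> : l.+1 - l = 1 by lia.
      have Ho : odd (l.+1 + l) by rewrite addSn /= addnn odd_double.
      by rewrite Ho.
    move: Hl Hl1 => /eqP Hl /eqP Hl1; lia.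
  apply: Btwo => //.
    apply/allP => x; rewrite inE => /orP [/eqP -> //|Hx].
    move: Hsort2; rewrite /= (path_sortedE geq_trans) => /andP [Hl3 _].
    have := allP Hl3 x Hx; rewrite /=; lia.
  apply: IH => //.
  + by move: Hn => /=; lia.
  + move=> x; have := Hm x; rewrite !cnt_cons; lia.
- have Hkj2 : k + 2 <= j.
    have Hl1 : k.+1 != j.
      apply/eqP => E; move: Hadj1; rewrite -E.
      have -> : k.+1 - k = 1 by lia.
      have Ho : odd (k.+1 + k) by rewrite addSn /= addnn odd_double.
      by rewrite Ho.
    move: nkj Hl1 => /eqP Hl /eqP Hl1; lia.
  apply: Bone => //.
    apply/allP => x; rewrite inE => /orP [/eqP -> //|Hx].
    have := allP Hle2 x Hx; rewrite /=; lia.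
  apply: IH => //.
  + by rewrite /= (path_sortedE geq_trans) Hle2 Hsort2.
  + by rewrite /= Hk Hall.
Qed.

Lemma cnt_le_sum j s : j \in s -> j <= sumn s.
Proof.
elim: s => [|x s IH] //=; rewrite inE => /orP [/eqP ->|/IH]; lia.
Qed.

Lemma B31_Bi s : sorted geq s -> all (fun x => 0 < x) s -> B31_cond s -> Bi s.
Proof.
rewrite /B31_cond /mult; move=> Hs Hp /and3P [/eqP H1 /allP H2 H3].
have Hall : all (fun x => 2 <= x) s.
  apply/allP => x Hx; have := allP Hp x Hx.
  case: x Hx => [|[|x]] Hx //=; move/count_memPn: H1; by rewrite Hx.
apply: (@B_Bi_aux (size s)) => //.
- move=> j; case: j => [|j].
    have -> : count_mem 0 s = 0 by apply/count_memPn/negP => /(allP Hall).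
    rewrite add0n H1; lia.
  have [Hj|Hj] := leqP j.+1 (sumn s).+1.
    apply: H2; rewrite mem_iota; lia.
  have -> : count_mem j.+1 s = 0 by apply/count_memPn/negP => /cnt_le_sum; lia.
  have -> : count_mem j.+2 s = 0 by apply/count_memPn/negP => /cnt_le_sum; lia.
  by [].
- by rewrite -adj_eq.
Qed.


Lemma max_att (r : seq nat) (P : pred nat) :
  \max_(j <- r | P j) j = 0 \/ (P (\max_(j <- r | P j) j) /\ \max_(j <- r | P j) j \in r).
Proof.
elim: r => [|a r IH]; first by left; rewrite big_nil.
rewrite big_cons; case Pa: (P a) => /=.
- rewrite /maxn; case: ltnP => Hm.
  + case: IH => [E|[H1 H2]]; first by move: Hm; rewrite E.
    by right; rewrite H1 inE H2 orbT.
  + by right; rewrite Pa inE eqxx.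
- case: IH => [->|[H1 H2]]; first by left.
  by right; rewrite H1 inE H2 orbT.
Qed.

Lemma R1_ub s j : 2 <= count_mem j s -> j <= R1 s.
Proof.
move=> H; rewrite /R1 /mult.
apply: (@leq_bigmax_seq _ _ (fun j => 2 <= count_mem j s) id j) => //.
by rewrite -has_pred1 has_count; lia.
Qed.

Lemma R1_att s : R1 s = 0 \/ 2 <= count_mem (R1 s) s.
Proof.
rewrite /R1 /mult; case: (max_att s (fun j => 2 <= count_mem j s)) => [->|[H _]]; by [left|right].
Qed.

Lemma R1_eq s r : 2 <= count_mem r s -> (forall j, 2 <= count_mem j s -> j <= r) -> R1 s = r.
Proof.
move=> H1 H2; have := R1_ub H1; case: (R1_att s) => [->|H]; first lia.
have := H2 _ H; lia.
Qed.

Lemma R1_0 s : (forall j, count_mem j s < 2) -> R1 s = 0.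
Proof. move=> H; case: (R1_att s) => [//|H2]; have := H (R1 s); lia. Qed.

Lemma R1_le s t : (forall j, 2 <= count_mem j s -> 2 <= count_mem j t) -> R1 s <= R1 t.
Proof.
move=> H; case: (R1_att s) => [->//|Hs]; exact/R1_ub/H.
Qed.

Lemma R1_ext s t : (forall j, (2 <= count_mem j s) = (2 <= count_mem j t)) -> R1 s = R1 t.
Proof.
move=> H; apply/eqP; rewrite eqn_leq !R1_le // => j; by rewrite H.
Qed.

Definition TP (s : seq nat) : Prop :=
  [/\ (forall j, odd j -> count_mem j s <= 1),
      (forall j, odd j -> j < R1 s + 2 -> count_mem j s = 0),
      (forall j, ~~ odd j -> 0 < j -> j < R1 s -> 2 <= count_mem j s) &
      (forall j, j \in s -> count_mem j.+1 s = 0)].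

Lemma T_TP s : T_cond s -> TP s.
Proof.
rewrite /T_cond /mult; case/and4P => /allP H1 /allP H2 /allP H3 /allP H4; split.
- move=> j Hj; case Hm: (j \in s); first by have := H1 j Hm; rewrite Hj.
  by move/count_memPn: (negbT Hm) => ->.
- move=> j Hj Hlt; have := H2 j; rewrite mem_iota Hj Hlt /= => /(_ erefl) /eqP; exact.
- move=> j Hj Hp Hlt; have := H3 j; rewrite mem_iota Hj Hp Hlt /=; exact.
- by move=> j /H4 /eqP.
Qed.

Lemma TP_T s : TP s -> T_cond s.
Proof.
rewrite /T_cond /mult; case => H1 H2 H3 H4; apply/and4P; split.
- by apply/allP => j _; apply/implyP => /H1.
- apply/allP => j _; apply/implyP => /andP [Ho Hl]; apply/eqP; exact: H2.
- apply/allP => j _; apply/implyP => /andP [/andP [Ho Hp] Hl]; exact: H3.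
- by apply/allP => j /H4 ->.
Qed.

Lemma cnt_map2_0 t : count_mem 0 (map (addn 2) t) = 0.
Proof. by elim: t. Qed.
Lemma cnt_map2_1 t : count_mem 1 (map (addn 2) t) = 0.
Proof. by elim: t. Qed.
Lemma cnt_map2_S y t : count_mem y.+2 (map (addn 2) t) = count_mem y t.
Proof. elim: t => //= x t ->; congr addn; by rewrite add2n eqSS. Qed.
Lemma cnt_nseq2 x c : count_mem x (nseq c 2) = (x == 2) * c.
Proof. elim: c => [|c IH] /=; first by rewrite muln0. rewrite IH eq_sym; case: (x == 2) => /=; lia. Qed.

Section L1.
Variables (t : seq nat) (c : nat).
Hypothesis Hc : 2 <= c.
Hypothesis Hp : all (fun x => 0 < x) t.
Let u := map (addn 2) t ++ nseq c 2.

Lemma t0 : count_mem 0 t = 0.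
Proof. by apply/count_memPn/negP => /(allP Hp). Qed.

Lemma u0 : count_mem 0 u = 0.
Proof. by rewrite /u count_cat cnt_map2_0 cnt_nseq2. Qed.
Lemma u1 : count_mem 1 u = 0.
Proof. by rewrite /u count_cat cnt_map2_1 cnt_nseq2. Qed.
Lemma uS y : count_mem y.+2 u = count_mem y t + (y == 0) * c.
Proof. rewrite /u count_cat cnt_map2_S cnt_nseq2; by case: y. Qed.

Lemma R1u : R1 u = (R1 t).+2.
Proof.
apply: R1_eq.
  rewrite uS; case: (R1_att t) => [->|H]; first by rewrite t0 /=; lia.
  lia.
case => [|[|y]]; rewrite ?u0 ?u1 // uS.
case: y => [|y]; first by move=> _; lia.
rewrite /= ?mul0n ?addn0 => /R1_ub; lia.
Qed.

Lemma mem_u x : x \in u = (x == 2) || ((2 <= x) && (x - 2 \in t)).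
Proof.
rewrite /u mem_cat; apply/orP/orP.
- case => [/mapP [y Hy ->]|/nseqP [-> _]]; last by left.
  right; rewrite leq_addr /=; have -> : 2 + y - 2 = y by lia. exact: Hy.
- case => [/eqP ->|/andP [H1 H2]]; first by right; apply/nseqP; split => //; lia.
  left; apply/mapP; exists (x - 2) => //; lia.
Qed.

Lemma L1 : TP u <-> TP t.
Proof.
split.
- case => H1 H2 H3 H4; split.
  + move=> y Hy; have := H1 y.+2; rewrite uS /= Hy => /(_ erefl).
    by case: y Hy => [|y] //= _; rewrite ?mul0n ?addn0.
  + move=> y Hy Hl; have := H2 y.+2; rewrite uS R1u /=.
    rewrite negbK; move=> /(_ Hy ltac:(lia)).
    by case: y Hy {Hl} => [|y1] //= _; rewrite ?mul0n ?addn0.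
  + move=> y Hy Hp0 Hl; have := H3 y.+2; rewrite uS R1u /=.
    rewrite ?negbK; move=> /(_ Hy erefl ltac:(lia)).
    by case: y Hy Hp0 {Hl} => [|y1] //= _ _; rewrite ?mul0n ?addn0.
  + move=> y Hy; have := H4 y.+2; rewrite uS mem_u.
    have -> : y.+2 - 2 = y by lia.
    by rewrite Hy orbT => /(_ erefl); rewrite ?mul0n ?addn0.
- case => H1 H2 H3 H4; split.
  + move=> j Hy; case: j Hy => [|[|y]] Hy; rewrite ?u0 ?u1 // uS.
    case: y Hy => [|y] //= Hy; rewrite ?mul0n ?addn0.
    apply: H1; move: Hy; rewrite /= ?negbK //.
  + move=> j Hy Hl; case: j Hy Hl => [|[|y]] Hy Hl; rewrite ?u0 ?u1 // uS; rewrite R1u in Hl.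
    case: y Hy Hl => [|y] //= Hy Hl; rewrite ?mul0n ?addn0.
    apply: H2; [move: Hy; rewrite /= ?negbK // | lia].
  + move=> j Hy Hp0 Hl; case: j Hy Hp0 Hl => [|[|y]] Hy Hp0 Hl //; rewrite uS; rewrite R1u in Hl.
    case: y Hy Hp0 Hl => [|y] Hy Hp0 Hl; first by rewrite t0 /=; lia.
    rewrite /= ?mul0n ?addn0; apply: H3; [move: Hy; rewrite /= ?negbK // | lia | lia].
  + move=> x; rewrite mem_u => /orP [/eqP ->|/andP [Hx1 Hx2]].
      rewrite (uS 1) /= ?mul0n ?addn0; apply: H2 => //; lia.
    have -> : x.+1 = (x - 2).+1.+2 by lia.
    by rewrite uS H4 //= ?mul0n.
Qed.
End L1.

Section L2.
Variables (t : seq nat) (j : nat).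
Hypothesis Hj : 2 <= j.
Hypothesis Ha : all (fun x => x + 2 <= j) t.

Lemma cnt_big x : j <= x.+2 -> count_mem x.+1 t = 0 /\ count_mem j t = 0.
Proof.
by move=> H; split; apply/count_memPn/negP => /(allP Ha); lia.
Qed.

Lemma cj0 : count_mem j t = 0.
Proof. by apply/count_memPn/negP => /(allP Ha); lia. Qed.

Lemma cjx x : count_mem x (j :: t) = (j == x) + count_mem x t.
Proof. by []. Qed.

Lemma R1j : R1 (j :: t) = R1 t.
Proof.
apply: R1_ext => x; rewrite cjx.
have [E|nx] := eqVneq j x; last by [].
by rewrite -E cj0.
Qed.

Lemma R1lt : R1 t + 2 <= j.
Proof.
case: (R1_att t) => [->//|H].
have : R1 t \in t by rewrite -has_pred1 has_count; lia.
by move/(allP Ha).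
Qed.

Lemma L2 : TP (j :: t) <-> TP t.
Proof.
have HR := R1lt.
split.
- case => H1 H2 H3 H4; split.
  + move=> x Hx; have := H1 x Hx; rewrite cjx; lia.
  + move=> x Hx Hl; have := H2 x Hx; rewrite R1j cjx => /(_ Hl); lia.
  + move=> x Hx Hp Hl; have := H3 x Hx Hp; rewrite R1j cjx => /(_ Hl).
    have -> : (j == x) = false by apply/negbTE/eqP; lia.
    by [].
  + move=> x Hx; have := H4 x; rewrite inE Hx orbT cjx => /(_ erefl); lia.
- case => H1 H2 H3 H4; split.
  + move=> x Hx; rewrite cjx; have [<-|nx] := eqVneq j x.
      by rewrite cj0.
    by rewrite add0n; apply: H1.
  + move=> x Hx Hl; rewrite R1j in Hl; rewrite cjx.
    have -> : (j == x) = false by apply/negbTE/eqP; lia.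
    exact: H2.
  + move=> x Hx Hp Hl; rewrite R1j in Hl; rewrite cjx.
    have -> : (j == x) = false by apply/negbTE/eqP; lia.
    exact: H3.
  + move=> x; rewrite inE cjx => /orP [/eqP ->|Hx].
      have -> : (j == j.+1) = false by apply/negbTE/eqP; lia.
      by apply/count_memPn/negP => /(allP Ha); lia.
    have -> : (j == x.+1) = false.
      by apply/negbTE/eqP; have := allP Ha x Hx; lia.
    by rewrite H4.
Qed.
End L2.


Lemma Bi_sorted s : Bi s -> sorted geq s.
Proof.
elim => [|j s1 Hj Ha Hs IH|j s1 Hj Ha Hs IH] //=.
- rewrite (path_sortedE geq_trans) IH andbT; apply/allP => x /(allP Ha) /=; lia.
- rewrite leqnn /= (path_sortedE geq_trans) IH andbT; apply/allP => x /(allP Ha) /=; lia.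
Qed.

Lemma f_small s j : Bi s -> (s = [::] \/ head 0 s + 2 <= j) -> all (fun x => x + 2 <= j) (f s).
Proof.
move=> Hs H; have [_ H2 _ _ _] := f_props Hs.
case: H => [E|H]; first by rewrite E.
apply/allP => x /(allP H2) /=; lia.
Qed.

Lemma Bi_TP s : Bi s -> TP (f s).
Proof.
elim => [|j s1 Hj Ha Hs IH|j s1 Hj Ha Hs IH].
- have E0 : R1 [::] = 0 by rewrite /R1 big_nil.
  by split => // x; rewrite E0 /=; lia.
- rewrite f_one //; apply/L2 => //; apply: f_small => //.
  by move: Ha; case: (s1) => [|y s''] /=; [left | move/andP=> [? _]; right].
- have [G1 _ G3 _ _] := f_props Hs.
  have hs : head 0 s1 + 2 <= j.
    move: Ha; case: (s1) => [|y s''] /=; [lia | move/andP=> [? _]; lia].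
  rewrite f_two; apply/L1 => //; first lia.
  apply/allP => x /(allP G1) /=; lia.
Qed.

Lemma count_le_S r t : count (fun x => x <= r.+1) t = count (fun x => x <= r) t + count_mem r.+1 t.
Proof.
elim: t => [|a t IH] //=; rewrite IH.
case: (ltngtP a r.+1) => H.
- have -> : a <= r by lia. by rewrite /= addnA.
- have -> : (a <= r) = false by apply/negbTE; lia. by [].
- subst a; rewrite ltnn /=; lia.
Qed.

Lemma evens_count t m : (forall k, 0 < k <= m.*2 -> ~~ odd k -> 2 <= count_mem k t) ->
  m.*2 <= count (fun x => x <= m.*2) t.
Proof.
elim: m => [|m IH] H //.
have H' : forall k, 0 < k <= m.*2 -> ~~ odd k -> 2 <= count_mem k t.
  move=> k Hk; apply: H; move: Hk; rewrite doubleS; lia.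
have := IH H'; have := H m.*2.+2; rewrite doubleS !count_le_S /= odd_double /=.
move=> /(_ ltac:(lia) erefl); lia.
Qed.

Lemma gap_size t : sorted geq t -> all (fun x => 2 <= x) t -> (forall j, count_mem j t <= 1) ->
  (forall j, j \in t -> count_mem j.+1 t = 0) -> 2 * size t <= head 0 t.
Proof.
elim: t => [|a t IH] //= Hs /andP [Ha Hall] H1 H4.
move: Hs; rewrite (path_sortedE geq_trans) => /andP [Hle Hs].
have H1' : forall j, count_mem j t <= 1.
  by move=> x; apply: leq_trans (H1 x); apply: leq_addl.
have H4' : forall j, j \in t -> count_mem j.+1 t = 0.
  move=> x Hx; have := H4 x; rewrite inE Hx orbT => /(_ erefl) /eqP.
  by rewrite addn_eq0 => /andP [_ /eqP].
have := IH Hs Hall H1' H4'.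
case: t Hle Hs Hall H1 H4 H1' H4' {IH} => [|b t] /= Hle Hs Hall H1 H4 H1' H4'; first lia.
move: Hle => /andP [Hba _].
have Hb1 : b != a.
  apply/eqP => E; subst b; have := H1 a; rewrite eqxx; lia.
have Hb2 : b.+1 != a.
  apply/eqP => E; subst a; have := H4 b; rewrite !inE eqxx orbT => /(_ erefl).
  rewrite eqxx; lia.
move: Hb1 Hb2 => /eqP ? /eqP ?; lia.
Qed.

Lemma decomp t : sorted geq t -> all (fun x => 2 <= x) t ->
  t = map (addn 2) (map (subn^~ 2) (filter (fun x => 2 < x) t)) ++ nseq (count_mem 2 t) 2.
Proof.
elim: t => [|a t IH] //= Hs /andP [Ha Hall].
move: Hs; rewrite (path_sortedE geq_trans) => /andP [Hle Hs].
have IH' := IH Hs Hall.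
case: (ltngtP 2 a) => H.
- rewrite /=; have -> : 2 + (a - 2) = a by lia.
  congr cons; exact: IH'.
- lia.
- subst a.
  have Ef : filter (fun x => 2 < x) t = [::].
    apply/eqP; rewrite -(negbK (_ == _)) -has_filter; apply/hasPn => x Hx.
    have := allP Hle x Hx; rewrite /= -leqNgt; lia.
  move: IH'; rewrite Ef /= => E; rewrite {1}E /=; by [].
Qed.

Lemma TP_facts t : all (fun x => 0 < x) t -> TP t ->
  [/\ count_mem 1 t = 0, all (fun x => 2 <= x) t & count_mem 0 t = 0].
Proof.
move=> Hp [H1 H2 H3 H4].
have C1 : count_mem 1 t = 0 by apply: H2 => //; lia.
split => //.
- apply/allP => x Hx; have := allP Hp x Hx; case: x Hx => [|[|x]] Hx //= _.
  by move/count_memPn: C1; rewrite Hx.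
- by apply/count_memPn/negP => /(allP Hp).
Qed.

Lemma head_ge t x : sorted geq t -> x \in t -> x <= head 0 t.
Proof.
case: t => [|a t] //=; rewrite (path_sortedE geq_trans) => /andP [Hle _].
rewrite inE => /orP [/eqP ->//|Hx]; exact: (allP Hle x Hx).
Qed.

Lemma surj n t : size t <= n -> sorted geq t -> all (fun x => 0 < x) t -> TP t ->
  exists s, Bi s /\ f s = t.
Proof.
elim: n t => [|n IH] t Hn Hs Hp HT.
  by exists [::]; split; [exact: Bnil | case: t Hn {Hs Hp HT}].
case: t Hn Hs Hp HT => [|h t'] Hn Hs Hp HT; first by exists [::]; split; [exact: Bnil|].
have [C1 Hall2 C0] := TP_facts Hp HT.
have HT' := HT; case: HT' => H1 H2 H3 H4.
have Hsorted' : sorted geq t' by move: Hs; rewrite /= (path_sortedE geq_trans) => /andP [_ ->].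
have Hle : all (fun x => x <= h) t' by move: Hs; rewrite /= (path_sortedE geq_trans) => /andP [-> _].
have R1h : R1 (h :: t') <= h.
  case: (R1_att (h :: t')) => [->//|HR].
  apply: (head_ge Hs); by rewrite -has_pred1 has_count; lia.
have even_size : 0 < R1 (h :: t') -> R1 (h :: t') <= size (h :: t').
  move=> Hpos; set r := R1 (h :: t').
  have Hr2 : 2 <= count_mem r (h :: t').
    by case: (R1_att (h :: t')) => [E|//]; move: Hpos; rewrite /r E.
  have Hev : ~~ odd r.
    apply/negP => Ho; have := H1 r Ho; lia.
  have Er : r = (r./2).*2 by rewrite -[LHS](odd_double_half r) (negbTE Hev).
  have := @evens_count (h :: t') r./2.
  rewrite -Er => /(_ _).
  have Hc : forall k, 0 < k <= r -> ~~ odd k -> 2 <= count_mem k (h :: t').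
    move=> k /andP [Hk1 Hk2] Hk; have [Ekr|Nkr] := eqVneq k r; first by rewrite Ekr.
    apply: H3 => //; rewrite /r in Nkr *; move: Nkr => /eqP; lia.
  move=> /(_ Hc) Hcnt; apply: leq_trans Hcnt _; exact: count_size.
have Hsize_pos : 0 < size (h :: t') by [].
case: (ltnP (size (h :: t')) h) => Hsz.
-
  have Ch : count_mem h t' = 0.
    apply/eqP; rewrite -leqn0; rewrite leqNgt; apply/negP => Hc.
    have H2h : 2 <= count_mem h (h :: t') by rewrite cnt_cons eqxx add1n ltnS.
    have := R1_ub H2h => Hh.
    have HRh : R1 (h :: t') = h by lia.
    have := even_size ltac:(rewrite HRh; move: Hall2 => /= /andP [? _]; lia).
    rewrite HRh; lia.
  have Hh2 : 2 <= h by move: Hall2 => /= /andP [].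
  have Ha : all (fun x => x + 2 <= h) t'.
    apply/allP => x Hx.
    have Hxh := allP Hle x Hx.
    have Hxne : x != h by apply/eqP => E; move/count_memPn: Ch; rewrite -E Hx.
    have Hx1 : x.+1 != h.
      apply/eqP => E; have := H4 x; rewrite inE Hx orbT => /(_ erefl).
      rewrite E /= eqxx; lia.
    move: Hxne Hx1 => /eqP ? /eqP ?; simpl in Hxh; lia.
  have HTt' : TP t' by apply/(L2 Hh2 Ha).
  have Hp' : all (fun x => 0 < x) t' by move: Hp => /= /andP [].
  have [s' [Hs' Ef]] := IH t' ltac:(move: Hn => /=; lia) Hsorted' Hp' HTt'.
  have Has' : all (fun x => x + 2 <= h) s'.
    have := f_head Hs'; rewrite Ef => Hhd.
    have Hhd2 : head 0 s' + 2 <= h.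
      have Hht : head 0 t' + 2 <= h.
        by move: Ha; case: (t') => [|y u] /=; [lia | move/andP => [? _]; lia].
      move: Hsz => /= Hsz; lia.
    apply/allP => x Hx; have := allP (Bi_head Hs') x Hx; lia.
  exists (h :: s'); split; first by apply: Bone.
  by rewrite f_one // Ef.
-
  have HR0 : 0 < R1 (h :: t').
    rewrite lt0n; apply/negP => /eqP HR.
    have Hm1 : forall j, count_mem j (h :: t') <= 1.
      move=> j; rewrite leqNgt; apply/negP => Hj.
      have := R1_ub Hj; rewrite HR leqn0 => /eqP Ej.
      by move: Hj; rewrite Ej C0.
    have := gap_size Hs Hall2 Hm1 H4; rewrite /=; move: Hsz => /=; lia.
  set r := R1 (h :: t').
  have Hr2 : 2 <= count_mem r (h :: t').
    by case: (R1_att (h :: t')) => [E|//]; move: HR0; rewrite /r E.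
  have Hev : ~~ odd r by apply/negP => Ho; have := H1 r Ho; lia.
  have Hc : 2 <= count_mem 2 (h :: t').
    have [E2|N2] := eqVneq r 2; first by rewrite E2 in Hr2.
    apply: H3 => //; move: N2 => /eqP N2.
    have N1 : r <> 1 by move=> E1; rewrite E1 in Hev.
    rewrite -/r; lia.
  set c := count_mem 2 (h :: t').
  set u := map (subn^~ 2) (filter (fun x => 2 < x) (h :: t')).
  have E := decomp Hs Hall2.
  rewrite -/c -/u in E.
  have Hpu : all (fun x => 0 < x) u.
    rewrite all_map; apply/allP => x; rewrite mem_filter => /andP [Hx _] /=; lia.
  have HTu : TP u by apply/(L1 Hc Hpu); rewrite -E.
  have Hsu : size (h :: t') = size u + c by rewrite {1}E size_cat size_map size_nseq.
  have Hsortu : sorted geq u.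
    apply: (homo_sorted (e := geq)); first by move=> x y /=; lia.
    exact: (sorted_filter geq_trans _ Hs).
  have [s' [Hs' Ef]] := IH u ltac:(move: Hn; rewrite Hsu /=; lia) Hsortu Hpu HTu.
  set j := c + size u.
  have Hhd : head 0 u + 2 <= j.
    case Eu: u => [|y w] /=; first by rewrite /j; lia.
    have : h = 2 + y by move: E; rewrite Eu /= => -[].
    move: Hsz; rewrite Hsu /j Eu /=; lia.
  have Has' : all (fun x => x + 2 <= j) s'.
    have := f_head Hs'; rewrite Ef => Hfh.
    apply/allP => x Hx; have := allP (Bi_head Hs') x Hx; rewrite /j; lia.
  exists (j :: j :: s'); split; first by apply: Btwo => //; rewrite /j; lia.
  rewrite f_two Ef {1}E; congr (_ ++ nseq _ _); rewrite /j; lia.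
Qed.

Theorem theorem8 (n : nat) : B31 n = T n.
Proof.
rewrite /B31 /T; apply: (@count_bij _ _ f).
- move=> s /and3P [Hs Hp /eqP Hn] HB.
  have Hb := B31_Bi Hs Hp HB.
  have [G1 _ _ G4 G5] := f_props Hb.
  apply/andP; split; last exact/TP_T/Bi_TP.
  apply/and3P; split => //; last by rewrite G4 Hn.
  apply/allP => x /(allP G1); lia.
- move=> s1 s2 /and3P [Hs1 Hp1 _] HB1 /and3P [Hs2 Hp2 _] HB2.
  apply: f_inj; exact: B31_Bi.
- move=> t /and3P [Ht Hp /eqP Hn] HT.
  have [s [Hs Ef]] := surj (leqnn _) Ht Hp (T_TP HT).
  exists s => //.
  have [_ _ _ G4 _] := f_props Hs.
  apply/andP; split; last exact: Bi_B31.
  apply/and3P; split; first exact: Bi_sorted.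
    apply/allP => x /(allP (Bi_ge2 Hs)); lia.
  by rewrite -G4 Ef Hn.
Qed.
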